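(* Let $\|\cdot\|$ be a norm on $\mathbb{R}^d$ and let $\mathbf{X}$ be a random vector in $\mathbb{R}^d$ such that (C1) for every $y>0$ the truncated distribution $\mathbb{P}(\mathbf{X}\in\cdot\mid\|\mathbf{X}\|\le y)$ is nondegenerate (no hyperplane $\mathcal{H}$ has $\mathbb{P}(\mathbf{X}\in\mathcal{H}\mid\|\mathbf{X}\|\le y)=1$), and (C2) the distribution of $\|\mathbf{X}\|$ is absolutely continuous and regularly varying at infinity with index $-\alpha$, $\alpha>0$. Suppose moreover $\alpha\in(2,3]$. Then there exist $C>0$ and $\delta>0$ with $\mathbb{P}(\|\mathbf{X}\|\le\delta)<1$ such that $$\|\Sigma(y)^{-1/2}\|\le C\quad\text{for all } y\ge\delta.$$
   Context: $\Sigma(y)$ is the covariance matrix of the truncated distribution $\mathbb{P}(\mathbf{X}\in\cdot\mid\|\mathbf{X}\|\le y)$, and $\|\Sigma(y)^{-1/2}\|$ is the operator norm of the inverse square root of this (positive definite) matrix. Regular variation of $\|\mathbf{X}\|$ with index $-\alpha$ means $\mathbb{P}(\|\mathbf{X}\|>tx)/\mathbb{P}(\|\mathbf{X}\|>t)\to x^{-\alpha}$ as $t\to\infty$ for every $x>0$. *)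

(* Defs.v *)
From HB Require Import structures.
From mathcomp Require Import all_boot all_order all_algebra.
From mathcomp Require Import all_classical all_reals all_analysis.
Set Implicit Arguments. Unset Strict Implicit. Unset Printing Implicit Defensive.
Import Order.TTheory GRing.Theory Num.Theory.
Import numFieldNormedType.Exports.
Local Open Scope classical_set_scope.
Local Open Scope ring_scope.

Section Defs.
Context {R : realType} {n : nat}.

Definition is_norm (N : 'rV[R]_n -> R) : Prop :=
  [/\ forall x, N x = 0 -> x = 0,
      forall (a : R) x, N (a *: x) = `|a| * N x &
      forall x y, N (x + y) <= N x + N y].

Definition enorm (v : 'cV[R]_n) : R := Num.sqrt (\sum_i v i 0 ^+ 2).

Definition opnorm (A : 'M[R]_n) : R :=
  sup [set enorm (A *m v) | v in [set v : 'cV[R]_n | enorm v = 1]].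

Definition posdefmx (S : 'M[R]_n) : Prop :=
  S^T = S /\ forall v : 'cV[R]_n, v != 0 -> 0 < (v^T *m S *m v) 0 0.

(* Sigma^{-1/2}: the (unique) symmetric positive definite S with S S A = 1;
   defaults to 0 if none exists. *)
Definition invsqrtmx (A : 'M[R]_n) : 'M[R]_n :=
  match pselect (exists S : 'M[R]_n, posdefmx S /\ S *m S *m A = 1%:M) with
  | left h => projT1 (cid h)
  | right _ => 0
  end.

Context {d0 : measure_display} {T : measurableType d0} (P : probability T R).
Context (X : 'I_n -> {RV P >-> R}) (N : 'rV[R]_n -> R).

Definition vecX (w : T) : 'rV[R]_n := \row_i X i w.
Definition normX (w : T) : R := N (vecX w).

Definition trunc_event (y : R) : set T := [set w | normX w <= y].

Definition cond_prob (y : R) (A : set T) : R :=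
  fine (P (A `&` trunc_event y)) / fine (P (trunc_event y)).

Definition cond_exp (y : R) (f : T -> R) : R :=
  fine (\int[P]_(w in trunc_event y) (f w)%:E) / fine (P (trunc_event y)).

Definition trunc_cov (y : R) : 'M[R]_n :=
  \matrix_(i, j) (cond_exp y (fun w => X i w * X j w)
                  - cond_exp y (X i) * cond_exp y (X j)).

Definition hyperplane_event (a : 'rV[R]_n) (b : R) : set T :=
  [set w | \sum_i a 0 i * X i w = b].

End Defs.

(* Main.v *)
Require Import Defs.
From HB Require Import structures.
From mathcomp Require Import all_boot all_order all_algebra.
From mathcomp Require Import all_classical all_reals all_analysis.
From mathcomp Require Import measurable_realfun.
From mathcomp Require Import ring lra.
Import Order.TTheory GRing.Theory Num.Theory.
Import numFieldNormedType.Exports.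
Local Open Scope classical_set_scope.
Local Open Scope ring_scope.
Section NormFacts.
Context {R : realType} {n : nat} (N : 'rV[R]_n -> R) (HN : is_norm N).

Lemma N0 : N 0 = 0.
Proof. case: (HN) => _ HZ _; by rewrite -(scale0r 0) HZ normr0 mul0r. Qed.

Lemma NN x : N (- x) = N x.
Proof. case: (HN) => _ HZ _; by rewrite -scaleN1r HZ normrN1 mul1r. Qed.

Lemma Nge0 x : 0 <= N x.
Proof.
case: (HN) => _ _ HT; have := HT x (- x); rewrite subrr N0 NN => h.
by rewrite -(@pmulr_rge0 _ 2) // mulr2n mulrDl mul1r.
Qed.

Lemma Nsum (I : Type) (r : seq I) (F : I -> 'rV[R]_n) :
  N (\sum_(i <- r) F i) <= \sum_(i <- r) N (F i).
Proof.
case: (HN) => _ _ HT; elim: r => [|a r IH]; first by rewrite !big_nil N0.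
rewrite !big_cons; apply: le_trans (HT _ _) _; exact: lerD.
Qed.

Lemma Ndecomp (x : 'rV[R]_n) : x = \sum_i x 0 i *: delta_mx 0 i.
Proof. by rewrite {1}(matrix_sum_delta x) big_ord1. Qed.

Definition Kn := \sum_(i < n) N (delta_mx 0 i).

Lemma Kn_ge0 : 0 <= Kn.
Proof. by apply: sumr_ge0 => i _; exact: Nge0. Qed.

Lemma Nle x : N x <= \sum_i `|x 0 i| * N (delta_mx 0 i).
Proof.
case: (HN) => _ HZ _; rewrite {1}(Ndecomp x).
apply: le_trans (Nsum _ _ _) _.
by apply: ler_sum => i _; rewrite HZ.
Qed.

Lemma Nlip x z : N x - N z <= \sum_i `|x 0 i - z 0 i| * N (delta_mx 0 i).
Proof.
case: (HN) => _ _ HT; rewrite lerBlDr; have := HT (x - z) z; rewrite subrK => h; apply: le_trans h _.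

apply: lerD => //; apply: le_trans (Nle _) _; apply: ler_sum => i _.
by rewrite !mxE.
Qed.

Lemma Nlip_r (x z : 'rV[R]_n) (r : R) : (forall i, `|x 0 i - z 0 i| <= r) -> N x - N z <= r * Kn.
Proof.
move=> h; apply: le_trans (Nlip x z) _; rewrite /Kn mulr_sumr; apply: ler_sum => i _.
by apply: ler_wpM2r; [exact: Nge0| exact: h].
Qed.

Lemma entry_le_norm (x : 'rV[R]_n) i : `|x 0 i| <= `|x|.
Proof.
rewrite [leRHS]/Num.norm /= mx_normrE; apply/bigmax_geP; right => /=.
by exists (0, i).
Qed.

Lemma Ncont : continuous N.
Proof.
move=> x; apply/(@cvgrPdist_lt _ _ _ _ (nbhs_filter x)) => e e0.
have K1 : 0 < Kn + 1 by apply: ltr_wpDl Kn_ge0 ltr01.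
have := @cvgr_dist_lt _ _ _ (nbhs x) (nbhs_filter x) id x cvg_id (e / (Kn + 1)).
move=> /(_ (divr_gt0 e0 K1)); apply: filterS => t ht.
have h1 : `|N x - N t| <= `|x - t| * Kn.
  rewrite ler_norml; apply/andP; split.
    rewrite lerNl opprB; apply: Nlip_r => i; rewrite -normrN opprB.
    by have := entry_le_norm (t - x) i; rewrite !mxE.
  apply: (@Nlip_r x t) => i.
  by have := entry_le_norm (x - t) i; rewrite !mxE.
apply: le_lt_trans h1 _.
apply: (@le_lt_trans _ _ (`|x - t| * (Kn + 1))).
  by apply: ler_wpM2l => //; rewrite lerDl.
by rewrite -ltr_pdivlMr.
Qed.

End NormFacts.

Lemma Nlower {R : realType} {n : nat} (N : 'rV[R]_n -> R) (HN : is_norm N) :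
  exists2 M, 0 < M & forall (x : 'rV[R]_n) i, `|x 0 i| <= M * N x.
Proof.
case: n N HN => [|k] N' HN'.
  by exists 1 => // x [].
pose A := [set x : 'rV[R]_k.+1 | `|x| = 1].
have nrm1 (x : 'rV[R]_k.+1) : x != 0 -> `|(`|x|^-1 *: x)| = 1.
  move=> x0; rewrite normrZ normfV normr_id mulVf //.
  by rewrite normr_eq0.
have A0 : A !=set0.
  pose e0 : 'rV[R]_k.+1 := delta_mx 0 ord0.
  exists (`|e0|^-1 *: e0).
  apply: nrm1; apply/negP => /eqP /matrixP /(_ 0 ord0); rewrite /e0 !mxE /=.
  by move/eqP; rewrite oner_eq0.
have cA : compact A.
  apply: bounded_closed_compact.
    exists 1; split => // M M1 x /= Ax; rewrite Ax; exact: ltW.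
  rewrite /A (_ : [set x | _] = (@Num.norm _ _) @^-1` [set r : R | r = 1]) //.
  apply: preimage_closed; last exact: closed_eq.
  move=> z _; exact: norm_continuous.
have cN : {within A, continuous N'} by apply: continuous_subspaceT; exact: (@Ncont _ _ N' HN').
have := @EVT_min_rV R k.+1 N' A A0 cA cN.
case=> c /set_mem Ac cmin.
have c0 : c != 0.
  apply/negP => /eqP c0; move: Ac; rewrite /A c0 /=. 
  first [rewrite (@normr0 _ 'rV[R]_k.+1) | rewrite [`|_|]/Num.norm /= mx_norm0].
  by move/eqP; rewrite eq_sym oner_eq0.
have m0 : 0 < N' c.
  rewrite lt_neqAle (@Nge0 _ _ N' HN' _) andbT eq_sym; apply/negP => /eqP.
  by case: HN' => H _ _ /H /eqP; rewrite (negbTE c0).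
exists (N' c)^-1; first by rewrite invr_gt0.
move=> x i; apply: le_trans (entry_le_norm x i) _.
have [->|x0] := eqVneq x 0; first by rewrite normr0 (@N0 _ _ N' HN') mulr0.
have := cmin (`|x|^-1 *: x); rewrite inE => /(_ (nrm1 _ x0)).
case: HN' => _ HZ _; rewrite HZ normfV normr_id => h.
rewrite ler_pdivlMl //; rewrite -ler_pdivlMr ?normr_gt0 //.
by rewrite mulrC.
Qed.
Lemma sum_aux (R : comRingType) n (x y : 'I_n -> 'I_n -> R) (c : R) :
  \sum_i \sum_j (x i j - y i j * c) * c = (\sum_i \sum_j x i j - (\sum_i \sum_j y i j) * c) * c.
Proof.
rewrite [(\sum_i \sum_j y i j) * c]mulr_suml -sumrB mulr_suml; apply: eq_bigr => i _.
by rewrite mulr_suml -sumrB mulr_suml.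
Qed.

Section PD.
Context {R : realFieldType} {n : nat}.
Definition qf (M : 'M[R]_n) (v : 'cV[R]_n) := \sum_i \sum_j v i 0 * M i j * v j 0.
Definition bf (M : 'M[R]_n) (x y : 'cV[R]_n) := \sum_i \sum_j x i 0 * M i j * y j 0.

Lemma bfE M x y : bf M x y = \sum_i x i 0 * (M *m y) i 0.
Proof.
apply: eq_bigr => i _; rewrite mxE mulr_sumr; apply: eq_bigr => j _; by rewrite mulrA.
Qed.

Lemma bf_sym M x y : M^T = M -> bf M x y = bf M y x.
Proof.
move=> hM; rewrite /bf exchange_big /=; apply: eq_bigr => i _; apply: eq_bigr => j _.
have -> : M j i = M i j by rewrite -{1}hM mxE.
ring.
Qed.

Lemma bf_expand M x y t : bf M (t *: x - y) (t *: x - y) =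
  t ^+ 2 * bf M x x - t * (bf M x y + bf M y x) + bf M y y.
Proof.
transitivity (\sum_i \sum_j (t ^+ 2 * (x i 0 * M i j * x j 0) -
   t * (x i 0 * M i j * y j 0 + y i 0 * M i j * x j 0) + y i 0 * M i j * y j 0)).
  apply: eq_bigr => i _; apply: eq_bigr => j _; rewrite !mxE; ring.
under eq_bigr => i _ do rewrite big_split /= sumrB -!mulr_sumr big_split /=.
rewrite big_split /= sumrB -!mulr_sumr big_split /=.
by [].
Qed.

Lemma sq_le_sum (v : 'cV[R]_n) i : v i 0 ^+ 2 <= \sum_k v k 0 ^+ 2.
Proof. rewrite (bigD1 i) //= lerDl; apply: sumr_ge0 => k _; exact: sqr_ge0. Qed.

Lemma prod_le_sum (v : 'cV[R]_n) i j : `|v i 0 * v j 0| <= \sum_k v k 0 ^+ 2.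
Proof.
have h1 := sq_le_sum v i; have h2 := sq_le_sum v j.
rewrite normrM; move: h1 h2; rewrite -[v i 0 ^+ 2]real_normK ?num_real //.
rewrite -[v j 0 ^+ 2]real_normK ?num_real //.
have := normr_ge0 (v i 0); have := normr_ge0 (v j 0).
set a := `|v i 0|; set b := `|v j 0|; set s := \sum_k _.
nra.
Qed.

Lemma pd_lower (M : 'M[R]_n) : M^T = M -> (forall v, v != 0 -> 0 < qf M v) ->
  exists2 c : R, 0 < c & forall v : 'cV[R]_n, c * \sum_i v i 0 ^+ 2 <= qf M v.
Proof.
move=> hM hpos.
have hpsd u : 0 <= bf M u u.
  have [->|u0] := eqVneq u 0; last exact/ltW/hpos.
  rewrite /bf big1 // => i _; rewrite big1 // => j _; rewrite mxE !mul0r //.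
have unit : M \in unitmx.
  rewrite -row_free_unit -kermx_eq0; apply/eqP/row_matrixP => i; rewrite row0.
  set u := row i (kermx M).
  have uM : u *m M = 0 by rewrite /u -row_mul mulmx_ker row0.
  apply/eqP; apply: contraT => u0.
  have : 0 < qf M u^T.
    by apply: hpos; apply: contra u0 => /eqP h; rewrite -(trmxK u) h trmx0.
  have MuT : M *m u^T = 0 by rewrite -{1}hM -trmx_mul uM trmx0.
  rewrite (_ : qf M u^T = bf M u^T u^T) // bfE MuT.
  by rewrite big1 ?ltxx // => k _; rewrite !mxE mulr0.
pose Mi := invmx M; pose K := \sum_i \sum_j `|Mi i j| + 1.
have K0 : 0 < K.
  by rewrite /K ltr_pwDr // sumr_ge0 // => i _; rewrite sumr_ge0.
exists K^-1; first by rewrite invr_gt0.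
move=> v; set s := \sum_i v i 0 ^+ 2; pose w := Mi *m v.
have s0 : 0 <= s by rewrite sumr_ge0 // => i _; exact: sqr_ge0.
have Mw : M *m w = v by rewrite /w mulmxA mulmxV // mul1mx.
have Bvw : bf M v w = s by rewrite bfE Mw; apply: eq_bigr => i _; rewrite expr2.
have Bwv : bf M w v = s by rewrite bf_sym.
have Bww : bf M w w <= (K - 1) * s.
  rewrite bfE Mw /K addrK mulr_suml; apply: ler_sum => i _.
  rewrite /w mxE !mulr_suml; apply: ler_sum => j _.
  apply: le_trans (ler_norm _) _; rewrite -mulrA normrM; apply: ler_wpM2l => //.
  by rewrite mulrC; exact: prod_le_sum.
have := hpsd (K *: v - w); rewrite bf_expand Bvw Bwv => h.
rewrite (_ : qf M v = bf M v v) //.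
move: h Bww; set Q := bf M v v; set B := bf M w w => h Bww.
rewrite mulrC ler_pdivrMr //. 
nra.
Qed.
End PD.

Section Meas.
Context {R : realType} {n : nat} {d0 : measure_display} {T : measurableType d0}
  (P : probability T R) (X : 'I_n -> {RV P >-> R}) (N : 'rV[R]_n -> R).

Lemma mX i : measurable_fun setT (X i).
Proof. exact: measurable_funPT. Qed.

Lemma mset_bool (b : T -> bool) : measurable_fun setT b -> measurable [set w | b w].
Proof.
move=> mb; rewrite (_ : [set w | b w] = setT `&` b @^-1` [set true]).
  exact: mb.
by apply/seteqP; split => w /=; [move=> ->|case].
Qed.

Lemma meas_forall (F : 'I_n -> set T) : (forall i, measurable (F i)) ->
  measurable [set w | forall i, F i w].
Proof.
move=> mF.
suff h : forall s : seq 'I_n, measurable [set w | forall i, i \in s -> F i w].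
  rewrite (_ : [set w | forall i, F i w] = [set w | forall i, i \in enum 'I_n -> F i w]).
    exact: h.
  by apply/seteqP; split => w /= H i //; apply: H; rewrite mem_enum.
elim=> [|a s IH].
  rewrite (_ : [set w | _] = setT); first exact: measurableT.
  by apply/seteqP; split => w //= _ i; rewrite in_nil.
rewrite (_ : [set w | _] = F a `&` [set w | forall i, i \in s -> F i w]).
  exact: measurableI.
apply/seteqP; split => w /=.
  by move=> H; split; [apply: H; rewrite mem_head | move=> i iS; apply: H; rewrite in_cons iS orbT].
by move=> [Fa H] i; rewrite in_cons => /orP[/eqP ->|/H].
Qed.

Hypothesis HN : is_norm N.

Let Sqr (q : {ffun 'I_n -> rat}) (r : rat) (y : R) : set T :=
  if (0 < r) && (y + ratr r * Kn N < N (\row_i ratr (q i)))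
  then [set w | forall i, `|ratr (q i) - X i w| < ratr r] else set0.

Lemma meas_Sqr q r y : measurable (Sqr q r y).
Proof.
rewrite /Sqr; case: ifP => _; last exact: measurable0.
apply: meas_forall => i; apply: mset_bool; apply: measurable_fun_ltr => //.
apply: measurableT_comp => //; apply: measurable_funB => //; exact: mX.
Qed.

Lemma meas_gt (y : R) : measurable [set w | y < normX X N w].
Proof.
pose F (k : nat) : set T :=
  if @unpickle ({ffun 'I_n -> rat} * rat)%type k is Some qr then Sqr qr.1 qr.2 y else set0.
rewrite (_ : [set w | _] = \bigcup_k F k).
  by apply: bigcupT_measurable => k; rewrite /F; case: unpickle => [qr|]; [exact: meas_Sqr | exact: measurable0].
apply/seteqP; split => w /=.
- move=> yN; set x := vecX X w in yN.
  have K1 : 0 < Kn N + 1 by apply: ltr_wpDl (@Kn_ge0 _ _ N HN) ltr01.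
  have e0 : 0 < (N x - y) / (2 * (Kn N + 1)).
    by apply: divr_gt0; [rewrite subr_gt0 | apply: mulr_gt0].
  have [r] := rat_in_itvoo e0; rewrite in_itv /= => /andP[r0 re].
  have hq (i : 'I_n) : exists q : rat, ratr q \in `](x 0 i - ratr r), (x 0 i + ratr r)[.
    by apply: rat_in_itvoo; rewrite ltrD2l gtrN.
  pose q := [ffun i => xchoose (hq i)].
  have qi i : `|ratr (q i) - X i w| < ratr r.
    have := xchooseP (hq i); rewrite ffunE; move: (xchoose (hq i)) => c.
    rewrite in_itv /= /x /vecX mxE => /andP[h1 h2].
    rewrite ltr_distl; apply/andP; split.
      by move: h1; rewrite ltrBlDr addrC.
    exact: h2.
  exists (pickle (q, r)) => //.
  rewrite /F pickleK /= /Sqr.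
  have -> : (0 < r) = true by move: r0; rewrite ltr0q.
  set qv := \row_i ratr (q i).
  have hl : N x - N qv <= ratr r * Kn N.
    apply: Nlip_r => // i; rewrite /x /vecX /qv !mxE distrC; exact: ltW.
  have -> /= : y + ratr r * Kn N < N qv.
    have key : ratr r * (2 * (Kn N + 1)) < N x - y.
      by rewrite -ltr_pdivlMr //; apply: mulr_gt0.
    have rr : 0 < (ratr r : R) by move: r0; rewrite ltr0q.
    have kk := @Kn_ge0 _ _ N HN.
    have : ratr r * Kn N + ratr r * Kn N + y < N x.
      nra.
    move: hl; set a := ratr r * Kn N; lra.
  exact: qi.
- move=> [k _]; rewrite /F; case: unpickle => [[q r]|] //=; rewrite /Sqr /=.
  case: ifP => // /andP[r0 hy] hw.
  have : N (\row_i ratr (q i)) - N (vecX X w) <= ratr r * Kn N.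
    apply: Nlip_r => // i; rewrite /vecX !mxE; exact: ltW.
  move: hy; rewrite /normX; set a := ratr r * Kn N; lra.
Qed.

Lemma meas_trunc y : measurable (trunc_event X N y).
Proof.
rewrite (_ : trunc_event X N y = ~` [set w | y < normX X N w]).
  exact/measurableC/meas_gt.
by apply/seteqP; split => w /=; rewrite /trunc_event /= leNgt => /negP.
Qed.

Let A y := trunc_event X N y.

Definition good y (f : T -> R) := measurable_fun setT f /\
  exists b, forall w, A y w -> `|f w| <= b.

Lemma goodX y i : good y (X i).
Proof.
split; first exact: mX.
have [M M0 HM] := Nlower N HN; exists (M * y) => w Aw.
have := HM (vecX X w) i; rewrite /vecX mxE => h; apply: le_trans h _.
by apply: ler_wpM2l; [exact: ltW|].
Qed.

Lemma good_cst y c : good y (fun=> c).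
Proof. by split; [exact: measurable_cst | exists `|c|]. Qed.

Lemma goodD y f g : good y f -> good y g -> good y (fun w => f w + g w).
Proof.
move=> [mf [a ha]] [mg [b hb]]; split; first exact: measurable_funD.
exists (a + b) => w Aw; apply: le_trans (ler_normD _ _) _; apply: lerD; [exact: ha|exact: hb].
Qed.

Lemma goodM y f g : good y f -> good y g -> good y (fun w => f w * g w).
Proof.
move=> [mf [a ha]] [mg [b hb]]; split; first exact: measurable_funM.
exists (a * b) => w Aw; rewrite normrM; apply: ler_pM => //; [exact: ha|exact: hb].
Qed.

Lemma goodN y f : good y f -> good y (fun w => - f w).
Proof.
move=> [mf [a ha]]; split; first exact: measurable_funN.
by exists a => w Aw; rewrite normrN; exact: ha.
Qed.

Lemma good_sum y (I : Type) (r : seq I) (F : I -> T -> R) :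
  (forall i, good y (F i)) -> good y (fun w => \sum_(i <- r) F i w).
Proof.
move=> hF; elim: r => [|a r IH].
  by rewrite (_ : (fun _ => _) = fun=> 0); [exact: good_cst | apply/funext => w; rewrite big_nil].
rewrite (_ : (fun _ => _) = fun w => F a w + \sum_(i <- r) F i w).
  exact: goodD.
by apply/funext => w; rewrite big_cons.
Qed.

Lemma PA_fin y : P (A y) \is a fin_num.
Proof. by rewrite fin_num_measure //; exact: meas_trunc. Qed.

Lemma good_int y f : good y f -> P.-integrable (A y) (EFin \o f).
Proof.
move=> [mf [b hb]]; apply: measurable_bounded_integrable.
- exact: meas_trunc.
- by rewrite ltey_eq PA_fin.
- exact: measurable_funS mf.
- exists b; split; first exact: num_real.
  move=> M bM w Aw; apply: le_trans (hb w Aw) _; exact: ltW.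
Qed.

Let I y f := Rintegral P (A y) f.
Let p y := fine (P (A y)).

Lemma cond_expE y f : cond_exp X N y f = I y f / p y.
Proof. by []. Qed.

Lemma Rint_sum y (J : Type) (r : seq J) (F : J -> T -> R) :
  (forall i, good y (F i)) ->
  I y (fun w => \sum_(i <- r) F i w) = \sum_(i <- r) I y (F i).
Proof.
move=> hF; elim: r => [|a r IH].
  rewrite big_nil (_ : (fun _ => _) = fun=> 0); last by apply/funext => w; rewrite big_nil.
  by rewrite /I Rintegral_cst ?mul0r //; exact: meas_trunc.
rewrite big_cons (_ : (fun _ => _) = fun w => F a w + \sum_(i <- r) F i w); last first.
  by apply/funext => w; rewrite big_cons.
rewrite /I RintegralD; first by rewrite -IH.
- exact: meas_trunc.
- exact/good_int.
- exact/good_int/good_sum.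
Qed.

Lemma IZl y c f : good y f -> I y (fun w => c * f w) = c * I y f.
Proof. by move=> gf; rewrite /I RintegralZl //; [exact: meas_trunc| exact: good_int]. Qed.

Lemma ID y f g : good y f -> good y g -> I y (fun w => f w + g w) = I y f + I y g.
Proof. by move=> gf gg; rewrite /I RintegralD //; [exact: meas_trunc| exact: good_int| exact: good_int]. Qed.

Lemma Icst y c : I y (fun=> c) = c * p y.
Proof. by rewrite /I Rintegral_cst //; exact: meas_trunc. Qed.

Definition Zv (v : 'cV[R]_n) (w : T) := \sum_i v i 0 * X i w.

Lemma goodZ y v : good y (Zv v).
Proof. by apply: good_sum => i; apply: goodM; [exact: good_cst| exact: goodX]. Qed.


Lemma covQ y v : qf (trunc_cov X N y) v =
  (I y (fun w => Zv v w * Zv v w) - I y (Zv v) ^+ 2 / p y) / p y.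
Proof.
have gXX i j : good y (fun w => X i w * X j w) by apply: goodM; exact: goodX.
have -> : I y (fun w => Zv v w * Zv v w) =
    \sum_i \sum_j v i 0 * v j 0 * I y (fun w => X i w * X j w).
  rewrite (_ : (fun w => _) = fun w => \sum_i \sum_j v i 0 * v j 0 * (X i w * X j w)); last first.
    apply/funext => w; rewrite /Zv mulr_suml; apply: eq_bigr => i _.
    rewrite mulr_sumr; apply: eq_bigr => j _; ring.
  rewrite Rint_sum; last by move=> i; apply: good_sum => j; apply: goodM; [exact: good_cst|exact: gXX].
  apply: eq_bigr => i _; rewrite Rint_sum; last by move=> j; apply: goodM; [exact: good_cst|exact: gXX].
  by apply: eq_bigr => j _; rewrite IZl.
have -> : I y (Zv v) = \sum_i v i 0 * I y (X i).
  rewrite /Zv Rint_sum; last by move=> i; apply: goodM; [exact: good_cst|exact: goodX].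
  by apply: eq_bigr => i _; rewrite IZl //; exact: goodX.
rewrite expr2 big_distrlr /=.
transitivity (\sum_i \sum_j (v i 0 * v j 0 * I y (fun w => X i w * X j w)
   - v i 0 * I y (X i) * (v j 0 * I y (X j)) / p y) / p y).
  rewrite /qf; apply: eq_bigr => i _; apply: eq_bigr => j _; rewrite mxE !cond_expE; ring.
exact: sum_aux.
Qed.

Lemma p_le1 y : p y <= 1.
Proof.
have h := probability_le1 P (meas_trunc y).
rewrite /p (_ : (1 : R) = fine 1%E) //.
by apply: fine_le h; [exact: PA_fin| by []].
Qed.

Lemma p_gt0 y : (0 < P (A y))%E -> 0 < p y.
Proof.
by move=> h; apply: fine_gt0; rewrite h /= ltey_eq PA_fin.
Qed.

Lemma Ivar y v m : I y (fun w => (Zv v w - m) * (Zv v w - m)) =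
  I y (fun w => Zv v w * Zv v w) - 2 * m * I y (Zv v) + m * m * p y.
Proof.
have gZ := goodZ y v.
rewrite (_ : (fun w => _) = fun w => Zv v w * Zv v w + (- (2 * m) * Zv v w + m * m)); last first.
  by apply/funext => w; ring.
rewrite ID; [|exact: goodM|apply: goodD; [apply: goodM => //; exact: good_cst|exact: good_cst]].
rewrite ID; [|apply: goodM => //; exact: good_cst|exact: good_cst].
rewrite IZl // Icst; ring.
Qed.

Lemma Ivar_ge0 y v m : 0 <= I y (fun w => (Zv v w - m) * (Zv v w - m)).
Proof. by apply: Rintegral_ge0 => w _; rewrite -expr2 sqr_ge0. Qed.

Lemma Imono dl y g : dl <= y -> good y g -> good dl g -> (forall w, 0 <= g w) ->
  I dl g <= I y g.
Proof.
move=> dy gy gd g0; rewrite /I /Rintegral; apply: fine_le.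
- apply: integrable_fin_num; [exact: meas_trunc| exact: good_int].
- apply: integrable_fin_num; [exact: meas_trunc| exact: good_int].
apply: ge0_subset_integral.
- exact: meas_trunc.
- exact: meas_trunc.
- apply/measurable_EFinP; apply: measurable_funS (gy.1) => //; exact: meas_trunc.
- by move=> w _; rewrite lee_fin.
- by move=> w; rewrite /A /trunc_event /= => h; apply: le_trans h dy.
Qed.

Lemma qf_mono dl y v : (0 < P (A dl))%E -> dl <= y ->
  p dl * qf (trunc_cov X N dl) v <= qf (trunc_cov X N y) v.
Proof.
move=> Pd dy.
have pd := @p_gt0 dl Pd.
have Py : (0 < P (A y))%E.
  apply: lt_le_trans Pd _; apply: le_measure; rewrite ?inE; try exact: meas_trunc.
  by move=> w; rewrite /A /trunc_event /= => h; apply: le_trans h dy.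
have py := @p_gt0 y Py; have py1 := p_le1 y.
rewrite !covQ.
set ay := I y (fun w => Zv v w * Zv v w); set by_ := I y (Zv v).
set ad := I dl (fun w => Zv v w * Zv v w); set bd := I dl (Zv v).
pose m := by_ / p y.
have gq z : good z (fun w => (Zv v w - m) * (Zv v w - m)).
  by apply: goodM; apply: goodD; (exact: goodZ || exact: good_cst).
have g0 w : 0 <= (Zv v w - m) * (Zv v w - m) by rewrite -expr2 sqr_ge0.
have H1 := @Imono dl y _ dy (gq y) (gq dl) g0.
have H2 := Ivar_ge0 y v m.
rewrite !Ivar -/ay -/by_ -/ad -/bd in H1 H2.
have E : ay - 2 * m * by_ + m * m * p y = ay - by_ ^+ 2 / p y.
  by rewrite /m; field; rewrite gt_eqF.
rewrite E in H1 H2.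
have E2 : p dl * ((ad - bd ^+ 2 / p dl) / p dl) = ad - bd ^+ 2 / p dl.
  by field; rewrite gt_eqF.
rewrite E2.
have E3 : ad - 2 * m * bd + m * m * p dl - (ad - bd ^+ 2 / p dl) = (m * p dl - bd) ^+ 2 / p dl.
  by field; rewrite gt_eqF.
have H3 : ad - bd ^+ 2 / p dl <= ad - 2 * m * bd + m * m * p dl.
  by rewrite -subr_ge0 E3; apply: divr_ge0; [exact: sqr_ge0| exact: ltW].
have H4 : ay - by_ ^+ 2 / p y <= (ay - by_ ^+ 2 / p y) / p y.
  by rewrite ler_pdivlMr // ler_piMr.
apply: le_trans H3 _; apply: le_trans H1 H4.
Qed.

Lemma meas_hyp (a : 'rV[R]_n) b : measurable (hyperplane_event X a b).
Proof.
rewrite (_ : hyperplane_event X a b = [set w | (\sum_i a 0 i * X i w) == b]).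
  apply: mset_bool; apply: measurable_fun_eqr => //.
  apply: measurable_sum => i; apply: measurable_funM => //; exact: mX.
by apply/seteqP; split => w /=; rewrite /hyperplane_event /= => /eqP.
Qed.

Lemma qf_pos dl v : (0 < P (A dl))%E ->
  (forall (a : 'rV[R]_n) (b : R), a != 0 -> cond_prob X N dl (hyperplane_event X a b) != 1) ->
  v != 0 -> 0 < qf (trunc_cov X N dl) v.
Proof.
move=> Pd C1 v0.
have pd := @p_gt0 dl Pd.
rewrite covQ.
set a := I dl (fun w => Zv v w * Zv v w); set b := I dl (Zv v).
pose m := b / p dl.
have E : I dl (fun w => (Zv v w - m) * (Zv v w - m)) = a - b ^+ 2 / p dl.
  by rewrite Ivar -/a -/b /m; field; rewrite gt_eqF.
apply: divr_gt0 => //.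
have Q0 := Ivar_ge0 dl v m; rewrite E in Q0.
rewrite lt_neqAle Q0 andbT eq_sym; apply/negP => /eqP Q00.
rewrite Q00 in E.
pose g w := (Zv v w - m) * (Zv v w - m).
have gg : good dl g by apply: goodM; apply: goodD; (exact: goodZ || exact: good_cst).
have mD := meas_trunc dl.
have mg : measurable_fun (A dl) (EFin \o g).
  by apply/measurable_EFinP; exact: measurable_funS (gg.1).
have int0 : (\int[P]_(w in A dl) `|(EFin \o g) w| = 0)%E.
  rewrite (_ : (fun w => _) = EFin \o g); last first.
    by apply/funext => w /=; rewrite ger0_norm // /g -expr2 sqr_ge0.
  have fin := integrable_fin_num mD (@good_int dl g gg).
  by rewrite -(fineK fin); move: E; rewrite /I /Rintegral => ->.
have [B [mB PB0 sB]] := (ae_eq_integral_abs P mD mg).1 int0.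
pose H := hyperplane_event X v^T m.
have mH : measurable H by exact: meas_hyp.
have DH : P (A dl `\` H) = 0%E.
  apply/eqP; rewrite -measure_le0 -PB0; apply: le_measure; rewrite ?inE //.
    exact: measurableD.
  move=> w [Aw Hw]; apply: sB => /= /(_ Aw) /= [].
  move=> /eqP; rewrite /g mulf_eq0 orbb subr_eq0 => /eqP Zm; apply: Hw.
  by rewrite /H /hyperplane_event /= -Zm /Zv; apply: eq_bigr => i _; rewrite mxE.
have PAH : P (A dl) = P (A dl `&` H).
  have := measureDI P mD mH; rewrite /A /= in DH *; by move=> ->; rewrite DH add0e.
have vT : v^T != 0.
  by apply: contra v0 => /eqP h; rewrite -(trmxK v) h trmx0.
have := C1 _ m vT; rewrite /cond_prob -/H setIC -PAH -/(p dl) divff ?eqxx //.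
by rewrite gt_eqF.
Qed.
End Meas.

Section Final.
Context {R : realType} {n : nat}.

Lemma opnorm_le (M : 'M[R]_n) C : 0 <= C ->
  (forall v, enorm v = 1 -> enorm (M *m v) <= C) -> opnorm M <= C.
Proof.
move=> C0 h; rewrite /opnorm.
set E := [set _ | _ in _].
have [->|E0] := eqVneq E set0; first by rewrite sup0.
apply: ge_sup; first exact/set0P.
by move=> r [v /= v1 <-]; exact: h.
Qed.

Lemma sum_sq_eq1 (v : 'cV[R]_n) : enorm v = 1 -> \sum_i v i 0 ^+ 2 = 1.
Proof.
move=> h; rewrite -(sqr_sqrtr (a := \sum_i v i 0 ^+ 2)); last by rewrite sumr_ge0 // => i _; exact: sqr_ge0.
by rewrite -/(enorm v) h expr1n.
Qed.

Lemma inv_bound (S A : 'M[R]_n) (k : R) : 0 < k -> S^T = S -> S *m S *m A = 1%:M -> A^T = A ->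
  (forall z : 'cV[R]_n, k * \sum_i z i 0 ^+ 2 <= qf A z) ->
  forall v : 'cV[R]_n, enorm v = 1 -> enorm (S *m v) <= 1 + k^-1.
Proof.
move=> k0 hS hSSA hA hk v v1.
have s1 := @sum_sq_eq1 v v1.
set u := S *m v; set z := S *m u.
have ASS : A *m (S *m S) = 1%:M by apply: mulmx1C; rewrite hSSA.
have Az : A *m z = v by rewrite /z /u !mulmxA -(mulmxA A S S) ASS mul1mx.
set q := \sum_i u i 0 ^+ 2.
have q1 : q = \sum_i v i 0 * z i 0.
  have := @bf_sym _ _ S v u hS; rewrite !bfE -/z -/u => ->.
  by apply: eq_bigr => i _; rewrite expr2.
have q2 : q = qf A z.
  rewrite (_ : qf A z = bf A z z) // bfE Az q1; apply: eq_bigr => i _; exact: mulrC.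
have hz := hk z; rewrite -q2 in hz.
have q3 : q <= (\sum_i v i 0 ^+ 2) * k^-1 / 2 + k / 2 * \sum_i z i 0 ^+ 2.
  rewrite q1 !mulr_suml mulr_sumr -big_split /=.
  apply: ler_sum => i _.
  have : 0 <= (v i 0 - k * z i 0) ^+ 2 by exact: sqr_ge0.
  set a := v i 0; set b := z i 0 => h.
  rewrite -subr_ge0.
  have -> : a ^+ 2 * k^-1 / 2 + k / 2 * b ^+ 2 - a * b = (a - k * b) ^+ 2 / (2 * k).
    by field; rewrite gt_eqF.
  apply: divr_ge0 => //; rewrite mulr_ge0 //; exact: ltW.
rewrite s1 mul1r in q3.
have qk : q <= k^-1.
  have ki : k * k^-1 = 1 by rewrite mulfV // gt_eqF.
  have kp : 0 < k^-1 by rewrite invr_gt0.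
  move: q3 hz; set s := \sum_i _; nra.
have q0 : 0 <= q by rewrite sumr_ge0 // => i _; exact: sqr_ge0.
rewrite /enorm -/q.
apply: le_trans (ler_wsqrtr (_ : q <= (1 + k^-1) ^+ 2)) _.
  apply: le_trans qk _; have kp : 0 < k^-1 by rewrite invr_gt0.
  nra.
rewrite sqrtr_sqr ger0_norm //; apply: addr_ge0 => //; rewrite invr_ge0; exact: ltW.
Qed.
End Final.

Lemma cov_sym {R : realType} {n : nat} {d0 : measure_display} {T : measurableType d0}
  (P : probability T R) (X : 'I_n -> {RV P >-> R}) (N : 'rV[R]_n -> R) y :
  (trunc_cov X N y)^T = trunc_cov X N y.
Proof.
apply/matrixP => i j; rewrite !mxE mulrC; congr (_ - _).
by congr (cond_exp _ _ _ _); apply/funext => w; rewrite mulrC.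
Qed.

Theorem lemmaB1 (R : realType) (n : nat) (d0 : measure_display)
  (T : measurableType d0) (P : probability T R)
  (X : 'I_n -> {RV P >-> R}) (N : 'rV[R]_n -> R) (alpha : R) :
  is_norm N ->
  (* (C1) truncated distributions are well defined and nondegenerate *)
  (forall y : R, 0 < y ->
     (0 < P (trunc_event X N y))%E /\
     forall (a : 'rV[R]_n) (b : R), a != 0 ->
       cond_prob X N y (hyperplane_event X a b) != 1) ->
  (* (C2) law of ||X|| absolutely continuous w.r.t. Lebesgue measure *)
  (forall A : set R, measurable A -> (lebesgue_measure A = 0)%E ->
     P (normX X N @^-1` A) = 0%E) ->
  (* (C2) ||X|| regularly varying at infinity with index -alpha, alpha > 0 *)
  0 < alpha ->
  (forall x : R, 0 < x ->
     fine (P [set w | t * x < normX X N w]) / fine (P [set w | t < normX X N w])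
       @[t --> +oo] --> x `^ (- alpha)) ->
  (* alpha in (2, 3] *)
  2 < alpha <= 3 ->
  exists C : R, 0 < C /\ exists delta : R, 0 < delta /\
    fine (P (trunc_event X N delta)) < 1 /\
    forall y : R, delta <= y -> opnorm (invsqrtmx (trunc_cov X N y)) <= C.
Proof.
move=> HN C1 _ _ RV _.
have H1 := RV 1 ltr01; rewrite powR1 in H1.
have h12 : (2^-1 : R) < 1 by rewrite invf_lt1 // ltr1n.
have := cvgr_gt 1 H1 _ h12.
case=> M [_ HM].
pose dl := `|M| + 1.
have dl0 : 0 < dl by rewrite /dl ltr_pwDr.
have Mdl : M < dl by rewrite /dl (le_lt_trans (ler_norm M)) // ltrDl.
have hr := HM dl Mdl.
have fnz : fine (P [set w | dl < normX X N w]) != 0.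
  apply/negP => /eqP h; move: hr; rewrite h invr0 mulr0 => /lt_le_trans /(_ (lexx 0)).
  by rewrite ltNge invr_ge0 ler0n.
have [Pd C1d] := C1 dl dl0.
have mA := meas_trunc P X N HN dl.
have PAfin : P (trunc_event X N dl) \is a fin_num by rewrite fin_num_measure.
have fin1 : fine (P (trunc_event X N dl)) < 1.
  have := probability_setC P mA.
  rewrite (_ : ~` trunc_event X N dl = [set w | dl < normX X N w]); last first.
    by apply/seteqP; split => w /=; rewrite /trunc_event /= ltNge => /negP.
  rewrite -(fineK PAfin) -EFinB => hc.
  have h0 := p_le1 P X N HN dl.
  move: fnz; rewrite hc /= => h1.
  by rewrite lt_neqAle h0 andbT; apply: contra h1 => /eqP ->; rewrite subrr.
have pd := p_gt0 P X N HN dl Pd.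
have [c c0 hc] := pd_lower _ (cov_sym P X N dl) (fun v v0 => qf_pos P X N HN dl v Pd C1d v0).
set k := fine (P (trunc_event X N dl)) * c.
have k0 : 0 < k by rewrite mulr_gt0.
have C0 : 0 < 1 + k^-1 by rewrite ltr_pwDl // invr_ge0 ltW.
exists (1 + k^-1); split => //; exists dl; split => //; split => // y dly.
rewrite /invsqrtmx; case: pselect => [h|_].
  case: (cid h) => S [[hS _] hSSA] /=.
  apply: opnorm_le; first exact: ltW.
  have hk : forall z : 'cV[R]_n, k * \sum_i z i 0 ^+ 2 <= qf (trunc_cov X N y) z.
    move=> z; apply: le_trans (qf_mono P X N HN dl y z Pd dly).
    by rewrite /k -mulrA; apply: ler_wpM2l; [exact: ltW | exact: hc].
  move=> v v1; exact: (inv_bound S _ k k0 hS hSSA (cov_sym P X N y) hk v v1).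
apply: opnorm_le; first exact: ltW.
move=> v _; rewrite mul0mx /enorm big1 ?sqrtr0 //; first exact: ltW.
by move=> i _; rewrite mxE expr2 mul0r.
Qed.
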